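(* Let $\Gamma$ be a countable discrete group and $\mu$ a symmetric, generating probability measure on $\Gamma$. Assume there is a nonzero $f\in\ell^\infty(\Gamma)$ with $f*\mu=-f$. Then there exists a multiplicative character $\chi:\Gamma\to\mathbb T$ with $\chi(h)=-1$ for all $h\in\operatorname{supp}(\mu)$, hence $\chi*\mu=-\chi$. Moreover, for every $F\in\ell^\infty(\Gamma)$ with $F*\mu=-F$ there exists $f_1\in\ell^\infty(\Gamma)$ with $f_1*\mu=f_1$ such that $F=f_1\cdot\chi$ (pointwise product).
   Context: $(f*\mu)(x)=\sum_{h\in\Gamma}\mu(h)f(xh)$. $\mu$ symmetric: $\mu(g)=\mu(g^{-1})$; generating: its support generates $\Gamma$ as a group. *)

(* Defs.v *)
From mathcomp Require Import ssreflect ssrfun ssrbool eqtype choice.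
From Stdlib Require Import Reals.
From Coquelicot Require Import Coquelicot.

Set Implicit Arguments.
Unset Strict Implicit.

Record is_group (G : Type) (mul : G -> G -> G) (inv : G -> G) (e : G) : Prop := {
  grp_assoc : forall x y z, mul x (mul y z) = mul (mul x y) z;
  grp_idl : forall x, mul e x = x;
  grp_idr : forall x, mul x e = x;
  grp_invl : forall x, mul (inv x) x = e;
  grp_invr : forall x, mul x (inv x) = e }.

Inductive gen_by (G : Type) (mul : G -> G -> G) (inv : G -> G) (e : G)
    (S : G -> Prop) : G -> Prop :=
  | gen_one : gen_by mul inv e S e
  | gen_in : forall x, S x -> gen_by mul inv e S x
  | gen_inv : forall x, gen_by mul inv e S x -> gen_by mul inv e S (inv x)
  | gen_mul : forall x y, gen_by mul inv e S x -> gen_by mul inv e S y ->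
                gen_by mul inv e S (mul x y).

(* Sequence enumerating a family indexed by a countable type G:
   the n-th term is a g if n is the code of g, and zero otherwise
   (pickle is injective, so each g appears exactly once). *)
Definition cnt_seq (G : countType) (V : AbelianGroup) (a : G -> V) : nat -> V :=
  fun n => match @pickle_inv G n with Some g => a g | None => zero end.

Definition sum_G (G : countType) (V : NormedModule R_AbsRing) (a : G -> V) (l : V) : Prop :=
  is_series (cnt_seq a) l.

Definition prob_measure (G : countType) (mu : G -> R) : Prop :=
  (forall g, 0 <= mu g)%R /\ sum_G mu 1%R.

Definition symmetric_measure (G : Type) (inv : G -> G) (mu : G -> R) : Prop :=
  forall g, mu g = mu (inv g).

Definition supp (G : Type) (mu : G -> R) : G -> Prop := fun h => mu h <> 0%R.

Definition generating (G : Type) (mul : G -> G -> G) (inv : G -> G) (e : G)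
    (mu : G -> R) : Prop :=
  forall g, gen_by mul inv e (supp mu) g.

Definition in_linfty (G : Type) (f : G -> C) : Prop :=
  exists M : R, forall x, (Cmod (f x) <= M)%R.

(* conv_eq mul mu f g  <->  f * mu = g, where
   (f * mu)(x) = \sum_{h in G} mu(h) f(x h). *)
Definition conv_eq (G : countType) (mul : G -> G -> G) (mu : G -> R)
    (f g : G -> C) : Prop :=
  forall x, sum_G (fun h => Cmult (RtoC (mu h)) (f (mul x h))) (g x).

Definition character (G : Type) (mul : G -> G -> G) (chi : G -> C) : Prop :=
  (forall g, Cmod (chi g) = 1%R) /\
  (forall g h, chi (mul g h) = Cmult (chi g) (chi h)).

(* Main.v *)
Require Import Defs.
From mathcomp Require Import ssreflect ssrfun ssrbool eqtype choice.
From Stdlib Require Import Reals Lra Classical ClassicalEpsilon.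
From Coquelicot Require Import Coquelicot.

Lemma series_lin {K : AbsRing} {U V : NormedModule K} (phi : U -> V) (a : nat -> U) (l : U) :
  is_linear phi -> is_series a l -> is_series (fun n => phi (a n)) (phi l).
Proof.
move=> Hl Hs.
have E : forall n, sum_n (fun k => phi (a k)) n = phi (sum_n a n).
  elim=> [|n IH]; first by rewrite !sum_O.
  by rewrite !sum_Sn IH (linear_plus _ Hl).
apply: (filterlim_ext (fun n => phi (sum_n a n))); first by move=> n; rewrite E.
apply: filterlim_comp Hs _. exact: linear_cont.
Qed.

Lemma sumG_lin {G : countType} {U V : NormedModule R_AbsRing} (phi : U -> V) (a : G -> U) (l : U) :
  is_linear phi -> sum_G a l -> sum_G (fun g => phi (a g)) (phi l).
Proof.
move=> Hl Hs. rewrite /sum_G.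
apply: (is_series_ext (fun n => phi (cnt_seq a n))); last exact: series_lin.
move=> n; rewrite /cnt_seq. case: (pickle_inv n) => //. exact: linear_zero.
Qed.

Lemma sumG_ext {G : countType} {V : NormedModule R_AbsRing} {a b : G -> V} {l : V} :
  (forall g, a g = b g) -> sum_G a l -> sum_G b l.
Proof.
move=> E. apply: is_series_ext => n. rewrite /cnt_seq. case: (pickle_inv n) => //.
Qed.

Lemma sumG_scal {G : countType} {V : NormedModule R_AbsRing} (c : R) {a : G -> V} {l : V} :
  sum_G a l -> sum_G (fun g => scal c (a g)) (scal c l).
Proof.
move=> H. apply: (@sumG_lin G V V (fun v : V => scal c v)) => //.
apply: is_linear_scal_r. move=> n m. exact: Rmult_comm.
Qed.

Lemma sumG_plus {G : countType} {V : NormedModule R_AbsRing} {a b : G -> V} {la lb : V} :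
  sum_G a la -> sum_G b lb -> sum_G (fun g => plus (a g) (b g)) (plus la lb).
Proof.
move=> Ha Hb. rewrite /sum_G.
apply: (is_series_ext (fun n => plus (cnt_seq a n) (cnt_seq b n))); last exact: is_series_plus.
move=> n; rewrite /cnt_seq. case: (pickle_inv n) => //. exact: plus_zero_r.
Qed.

Lemma term_le_sum (b : nat -> R) (l : R) :
  (forall n, 0 <= b n) -> is_series b l -> forall n, b n <= l.
Proof.
move=> Hp Hs n.
have Hpos : forall m, 0 <= sum_n b m.
  elim=> [|m IH]; first by rewrite sum_O.
  rewrite sum_Sn. have := Hp (S m). rewrite /plus /=. lra.
have Hle : b n <= sum_n b n.
  case: n => [|m]; first by rewrite sum_O; lra.
  rewrite sum_Sn. have := Hpos m. rewrite /plus /=. lra.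
have : sum_n b n <= l.
  apply: (is_lim_seq_incr_compare (sum_n b)) => //.
  move=> m. rewrite sum_Sn. have := Hp (S m). rewrite /plus /=. lra.
lra.
Qed.

Lemma sumG_term_le {G : countType} {a : G -> R} {l : R} :
  (forall g, 0 <= a g) -> sum_G a l -> forall g, a g <= l.
Proof.
move=> Hp Hs g.
have := term_le_sum _ _ _ Hs (pickle g). rewrite /cnt_seq pickleK_inv. apply.
move=> n. case: (pickle_inv n) => [h|]; [exact: Hp | apply: Rle_refl].
Qed.

Lemma lin_Re : @is_linear R_AbsRing C_R_NormedModule R_NormedModule (fun z : C => Re z).
Proof. exact: is_linear_fst. Qed.
Lemma lin_Im : @is_linear R_AbsRing C_R_NormedModule R_NormedModule (fun z : C => Im z).
Proof. exact: is_linear_snd. Qed.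
Lemma lin_RtoC : @is_linear R_AbsRing R_NormedModule C_R_NormedModule (fun r : R => RtoC r).
Proof. apply: (is_linear_ext (fun k:R => scal k (RtoC 1))). move=> k. rewrite scal_R_Cmult. apply Cmult_1_r. exact: is_linear_scal_l. Qed.

Lemma im_le_Cmod (c : C) : Rabs (Im c) <= Cmod c.
Proof.
rewrite /Cmod -sqrt_Rsqr_abs. apply: sqrt_le_1_alt. rewrite /Rsqr /=.
rewrite /Im; nra.
Qed.

Section Grp.
Variables (G : Type) (mul : G -> G -> G) (inv : G -> G) (e : G).
Hypothesis Hg : is_group mul inv e.

Lemma inv_uniq a b : mul a b = e -> b = inv a.
Proof.
move=> H. rewrite -(grp_idl Hg b) -(grp_invl Hg a) -(grp_assoc Hg) H. exact: grp_idr Hg _.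
Qed.
Lemma inv_inv x : inv (inv x) = x.
Proof. symmetry. apply: inv_uniq. exact: grp_invl Hg _. Qed.
Lemma inv_e : inv e = e.
Proof. symmetry. apply: inv_uniq. exact: grp_idl Hg _. Qed.
Lemma inv_mul x y : inv (mul x y) = mul (inv y) (inv x).
Proof.
symmetry. apply: inv_uniq.
rewrite (grp_assoc Hg) -(grp_assoc Hg x) (grp_invr Hg) (grp_idr Hg). exact: grp_invr Hg _.
Qed.
End Grp.

Section Core.
Variables (G : countType) (mul : G -> G -> G) (inv : G -> G) (e : G).
Hypothesis Hgrp : is_group mul inv e.
Variable mu : G -> R.
Hypothesis Hprob : prob_measure mu.
Hypothesis Hsym : symmetric_measure inv mu.
Hypothesis Hgen : generating mul inv e mu.
Variables (u : G -> R) (s : R).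
Hypothesis Hs : 0 < s.
Hypothesis Hbound : forall x, Rabs (u x) <= s.
Hypothesis Happ : forall d, 0 < d -> exists x, s - d < Rabs (u x).
Hypothesis Hconv : forall x, sum_G (fun h => mu h * u (mul x h)) (- u x).

Definition Pc (g : G) (c : R) : Prop :=
  exists K, 0 < K /\ forall x sg d, (sg = 1 \/ sg = -1) -> s - d < sg * u x ->
     s - K * d < c * sg * u (mul x g).

Lemma Pc_e : Pc e 1.
Proof.
exists 1; split; first lra. move=> x sg d _ H. rewrite (grp_idr Hgrp). lra.
Qed.

Lemma Pc_supp h : 0 < mu h -> Pc h (-1).
Proof.
move=> Hh. exists (/ mu h); split; first exact: Rinv_0_lt_compat.
move=> x sg d Hsg H.
have Hc := Hconv x.
have Hs1 := sumG_scal sg Hc.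
have Hs2 := sumG_scal s (proj2 Hprob).
have Hs3 := sumG_plus Hs1 Hs2.
have Hs4 : sum_G (fun k => mu k * (sg * u (mul x k) + s)) (sg * - u x + s).
  have -> : sg * - u x + s = plus (scal sg (- u x)) (scal s 1).
    rewrite /plus /scal /= /mult /=. ring.
  apply: (sumG_ext _ Hs3) => k. rewrite /plus /scal /= /mult /=. ring.
have Hle := fun Hp => sumG_term_le Hp Hs4 h.
have Hsx : forall y, 0 <= sg * u y + s.
  move=> y. have := Hbound y. move/Rabs_le_between. case: Hsg => ->; lra.
have := Hle (fun k => Rmult_le_pos _ _ (proj1 Hprob k) (Hsx _)).
move=> H2.
have H3 : sg * u (mul x h) + s < / mu h * d.
  have -> : / mu h * d = (mu h * (sg * u (mul x h) + s) + (d - mu h * (sg * u (mul x h) + s))) / mu h.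
    field; lra.
  have -> : (mu h * (sg * u (mul x h) + s) + (d - mu h * (sg * u (mul x h) + s))) / mu h
     = (sg * u (mul x h) + s) + (d - mu h * (sg * u (mul x h) + s)) / mu h.
    field; lra.
  have : 0 < (d - mu h * (sg * u (mul x h) + s)) / mu h.
    apply: Rdiv_lt_0_compat => //. lra.
  lra.
lra.
Qed.

Lemma Pc_mul g h c1 c2 : (c1 = 1 \/ c1 = -1) -> Pc g c1 -> Pc h c2 -> Pc (mul g h) (c1 * c2).
Proof.
move=> Hc1 [K1 [HK1 H1]] [K2 [HK2 H2]].
exists (K2 * K1); split; first exact: Rmult_lt_0_compat.
move=> x sg d Hsg H.
have A := H1 x sg d Hsg H.
have Hsg' : c1 * sg = 1 \/ c1 * sg = -1.
  case: Hc1 => ->; case: Hsg => ->; lra.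
have B := H2 (mul x g) (c1 * sg) (K1 * d) Hsg' A.
rewrite (grp_assoc Hgrp).
have -> : c1 * c2 * sg = c2 * (c1 * sg) by ring.
have -> : K2 * K1 * d = K2 * (K1 * d) by ring.
exact: B.
Qed.

Lemma Pc_uniq g c c' : (c = 1 \/ c = -1) -> (c' = 1 \/ c' = -1) -> Pc g c -> Pc g c' -> c = c'.
Proof.
move=> Hc Hc' [K [HK H]] [K' [HK' H']].
apply: NNPP => Hne.
have Hcc : c' = - c.
  case: Hc => ?; case: Hc' => ?; subst; try lra; exfalso; apply: Hne; reflexivity.
set d := s / (K + K').
have Hd : 0 < d by apply: Rdiv_lt_0_compat; lra.
have Hdd : K * d + K' * d = s by rewrite /d; field; lra.
case: (Happ _ Hd) => x Hx.
set sg := if Rle_dec 0 (u x) then 1 else -1.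
have Hsg : sg = 1 \/ sg = -1 by rewrite /sg; case: Rle_dec; [left|right].
have Hsu : sg * u x = Rabs (u x).
  rewrite /sg; case: Rle_dec => Hu /=; [rewrite Rabs_pos_eq; lra | rewrite Rabs_left; lra].
have A := H x sg d Hsg ltac:(lra).
have B := H' x sg d Hsg ltac:(lra).
rewrite Hcc in B.
have : c * sg * u (mul x g) + - c * sg * u (mul x g) = 0 by ring.
lra.
Qed.

Definition Qg (g : G) : Prop := exists c, (c = 1 \/ c = -1) /\ Pc g c /\ Pc (inv g) c.

Lemma Qg_all g : Qg g.
Proof.
elim: (Hgen g) => [|x Hx|x _ [c [Hc [P1 P2]]]|x y _ [c1 [Hc1 [P1 P2]]] _ [c2 [Hc2 [P3 P4]]]].
- exists 1; split; [by left| split; [exact: Pc_e | rewrite (@inv_e _ _ _ _ Hgrp); exact: Pc_e]].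
- have Hm : 0 < mu x.
    have := proj1 Hprob x. rewrite /supp in Hx. lra.
  exists (-1); split; [by right| split; first exact: Pc_supp].
  apply: Pc_supp. by rewrite -Hsym.
- exists c; split => //; split => //. by rewrite (@inv_inv _ _ _ _ Hgrp).
- exists (c1 * c2); split.
    case: Hc1 => ->; case: Hc2 => ->; [left|right|right|left]; ring.
  split; first exact: Pc_mul.
  rewrite (@inv_mul _ _ _ _ Hgrp) Rmult_comm. exact: Pc_mul.
Qed.

Definition chir (g : G) : R := if excluded_middle_informative (Pc g 1) then 1 else -1.

Lemma chir_val g c : (c = 1 \/ c = -1) -> Pc g c -> chir g = c.
Proof.
move=> Hc P. rewrite /chir. case: excluded_middle_informative => H /=.
- exact: (Pc_uniq g 1 c (or_introl erefl) Hc H P).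
- case: Hc => // Hc. subst c. exfalso. apply: H. done.
Qed.

Lemma chir_pm g : chir g = 1 \/ chir g = -1.
Proof. rewrite /chir; case: excluded_middle_informative => /= _; [left|right] => //. Qed.

Lemma chir_mul g h : chir (mul g h) = chir g * chir h.
Proof.
have [c1 [Hc1 [P1 _]]] := Qg_all g.
have [c2 [Hc2 [P2 _]]] := Qg_all h.
rewrite (chir_val _ _ Hc1 P1) (chir_val _ _ Hc2 P2). apply: chir_val; last exact: Pc_mul.
case: Hc1 => ->; case: Hc2 => ->; [left|right|right|left]; ring.
Qed.

Lemma chir_supp h : mu h <> 0 -> chir h = -1.
Proof.
move=> Hh. apply: chir_val; first by right. apply: Pc_supp.
have := proj1 Hprob h. lra.
Qed.

End Core.

Theorem theoremB (G : countType) (mul : G -> G -> G) (inv : G -> G) (e : G)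
  (Hgrp : is_group mul inv e) (mu : G -> R)
  (Hprob : prob_measure mu) (Hsym : symmetric_measure inv mu)
  (Hgen : generating mul inv e mu) :
  (exists f : G -> C, in_linfty f /\ (exists x, f x <> RtoC 0%R) /\
     conv_eq mul mu f (fun x => Copp (f x))) ->
  exists chi : G -> C,
    character mul chi /\
    (forall h, supp mu h -> chi h = Copp (RtoC 1%R)) /\
    conv_eq mul mu chi (fun x => Copp (chi x)) /\
    (forall F : G -> C, in_linfty F -> conv_eq mul mu F (fun x => Copp (F x)) ->
       exists f1 : G -> C, in_linfty f1 /\ conv_eq mul mu f1 f1 /\
         forall x, F x = Cmult (f1 x) (chi x)).
Proof.
move=> [f [[M HM] [[x0 Hx0] Hf]]].
have [u [Hub [Hu0 Hconvu]]] : exists u : G -> R, (exists M, forall x, Rabs (u x) <= M) /\ u x0 <> 0 /\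
    forall x, sum_G (fun h => mu h * u (mul x h)) (- u x).
  have gen : forall phi : C -> R, @is_linear R_AbsRing C_R_NormedModule R_NormedModule phi ->
      (forall m z, phi (Cmult (RtoC m) z) = m * phi z) ->
      (forall z, phi (Copp z) = - phi z) -> (forall z, Rabs (phi z) <= Cmod z) -> phi (f x0) <> 0 ->
      exists u : G -> R, (exists M, forall x, Rabs (u x) <= M) /\ u x0 <> 0 /\
        forall x, sum_G (fun h => mu h * u (mul x h)) (- u x).
    move=> phi Hl Hm Ho Hb Hn. exists (fun x => phi (f x)); split.
      exists M => x. exact: Rle_trans (Hb _) (HM x).
    split => // x.
    have H := sumG_lin phi _ _ Hl (Hf x). rewrite Ho in H.
    apply: (sumG_ext _ H) => h. exact: Hm.
  case: (Req_dec (Re (f x0)) 0) => Hre.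
  - apply: (gen (fun z => Im z)).
    + exact: lin_Im.
    + move=> m z. exact: im_scal_l.
    + by [].
    + exact: im_le_Cmod.
    + move=> Him; apply: Hx0. by apply: injective_projections.
  - apply: (gen (fun z => Re z)) => //.
    + exact: lin_Re.
    + move=> m z. exact: re_scal_l.
    + exact: re_le_Cmod.
have [Mu HMu] := Hub.
have HE : bound (fun r => exists x, r = Rabs (u x)).
  exists Mu => r [x ->]; exact: HMu.
have [s Hlub] := completeness _ HE (ex_intro _ (Rabs (u x0)) (ex_intro _ x0 erefl)).
have Hbnd : forall x, Rabs (u x) <= s := fun x => proj1 Hlub _ (ex_intro _ x erefl).
have Hs : 0 < s.
  have := Hbnd x0; have := Rabs_pos_lt _ Hu0; lra.
have Happ : forall d, 0 < d -> exists x, s - d < Rabs (u x).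
  move=> d Hd. apply: NNPP => Hn.
  have : s <= s - d.
    apply: (proj2 Hlub) => r [x ->]. apply: Rnot_lt_le => Hlt; apply: Hn; by exists x.
  lra.
have Hmulc := chir_mul G mul inv e Hgrp mu Hprob Hsym Hgen u s Hs Hbnd Happ Hconvu.
have Hsuppc := chir_supp G mul mu Hprob u s Hs Hbnd Happ Hconvu.
have Hpm := chir_pm G mul u s.
move: Hmulc Hsuppc Hpm; move: (chir G mul u s) => c Hmulc Hsuppc Hpm.
have Hterm : forall x h, mu h * c (mul x h) = - c x * mu h.
  move=> x h. case: (Req_dec (mu h) 0) => Hh.
  - rewrite Hh; ring.
  - rewrite Hmulc (Hsuppc h Hh); ring.
have Habs : forall g, Rabs (c g) = 1.
  move=> g; case: (Hpm g) => ->; [exact: Rabs_R1 | rewrite Rabs_Ropp; exact: Rabs_R1].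
exists (fun g => RtoC (c g)). split; [|split; [|split]].
- split => [g|g h]; first by rewrite Cmod_R.
  by rewrite Hmulc RtoC_mult.
- move=> h Hh. by rewrite Hsuppc // RtoC_opp.
- move=> x.
  have Hr : sum_G (fun h => mu h * c (mul x h)) (- c x).
    have -> : - c x = scal (- c x) 1 by rewrite /scal /= /mult /=; ring.
    apply: (sumG_ext _ (sumG_scal (- c x) (proj2 Hprob))) => h.
    rewrite Hterm /scal /= /mult /=; ring.
  have H := sumG_lin (fun r : R => RtoC r) _ _ lin_RtoC Hr.
  rewrite RtoC_opp in H.
  apply: (sumG_ext _ H) => h. by rewrite RtoC_mult.
- move=> F [MF HMF] HF. exists (fun x => Cmult (F x) (RtoC (c x))). split; [|split].
  + exists MF => x. by rewrite Cmod_mult Cmod_R Habs Rmult_1_r.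
  + move=> x.
    have H := sumG_scal (- c x) (HF x).
    have -> : Cmult (F x) (RtoC (c x)) = scal (- c x) (Copp (F x)).
      rewrite scal_R_Cmult RtoC_opp; ring.
    apply: (sumG_ext _ H) => h. rewrite scal_R_Cmult.
    have E := f_equal RtoC (Hterm x h). rewrite !RtoC_mult in E.
    have -> : Cmult (RtoC (mu h)) (Cmult (F (mul x h)) (RtoC (c (mul x h)))) =
      Cmult (F (mul x h)) (Cmult (RtoC (mu h)) (RtoC (c (mul x h)))) by ring.
    by rewrite E Cmult_assoc Cmult_comm.
  + move=> x. have Hsq : c x * c x = 1 by case: (Hpm x) => ->; ring.
    by rewrite -Cmult_assoc -RtoC_mult Hsq Cmult_1_r.
Qed.
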